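(* There exists a unique $\delta_\beta\in(0,b)$ with $\varphi(\delta_\beta)=\beta N$; moreover $\varphi(\delta)>\beta N$ for $\delta\in(0,\delta_\beta)$ and $\varphi(\delta)<\beta N$ for $\delta\in(\delta_\beta,b)$. The function $G$ is strictly increasing on $(0,\delta_\beta]$; consequently every maximizer $\delta^\ast$ of $G$ over $(0,b)$ satisfies $\delta^\ast\ge\delta_\beta$.
   Context: Parameters: $N>0$, $\sigma>0$, $b>0$, $\beta>0$. $\Phi$ and $\phi$ denote the standard normal cdf and pdf. For $\delta\in(0,b)$ let $q(\delta)=\frac{e^{b-\delta}-1}{e^b-1}\in(0,1)$ and $\varphi(\delta)=N\exp\!\left[\sigma\,\Phi^{-1}(q(\delta))-\delta-\frac{\sigma^2}{2}\right]$ (the vault's unconstrained optimal stablecoin issuance at interest rate $\delta$). Let $F^\ast(\delta)=\min(\varphi(\delta),\beta N)$ and define the governance objective $G(\delta)=F^\ast(\delta)(e^\delta-1)$ for $\delta\in(0,b)$. *)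

(* Defs.v *)
From HB Require Import structures.
From mathcomp Require Import all_boot all_order all_algebra.
From mathcomp Require Import all_classical all_reals all_analysis.
Set Implicit Arguments. Unset Strict Implicit. Unset Printing Implicit Defensive.
Import Order.TTheory GRing.Theory Num.Theory.
Local Open Scope classical_set_scope.
Local Open Scope ring_scope.

Definition std_normal_pdf {R : realType} (x : R) : R := normal_pdf 0 1 x.

Definition Phi {R : realType} (x : R) : R :=
  fine (normal_prob 0 1 `]-oo, x]).

(* quantile function Phi^{-1}: the (unique, since Phi is a bijection
   R -> (0,1)) x with Phi x = q; chosen by xget. *)
Definition Phi_inv {R : realType} (q : R) : R :=
  xget 0 [set x | Phi x = q].

Definition qfun {R : realType} (b d : R) : R :=
  (expR (b - d) - 1) / (expR b - 1).

Definition varphi {R : realType} (N sigma b d : R) : R :=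
  N * expR (sigma * Phi_inv (qfun b d) - d - sigma ^+ 2 / 2).

Definition Fstar {R : realType} (N sigma b beta d : R) : R :=
  Num.min (varphi N sigma b d) (beta * N).

Definition Gobj {R : realType} (N sigma b beta d : R) : R :=
  Fstar N sigma b beta d * (expR d - 1).

(* Main.v *)
Require Import Defs.
From HB Require Import structures.
From mathcomp Require Import all_boot all_order all_algebra.
From mathcomp Require Import all_classical all_reals all_analysis.
From mathcomp Require Import ring lra measurable_realfun.
Import Order.TTheory GRing.Theory Num.Theory.
Set Implicit Arguments. Unset Strict Implicit.
Import numFieldNormedType.Exports.
Local Open Scope ring_scope.
Local Open Scope classical_set_scope.

Section PhiSec.
Variable R : realType.
Local Notation P := (@normal_prob R 0 1).
Local Notation mu := (@lebesgue_measure R).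

Lemma P_fin (A : set R) : measurable A -> P A = (fine (P A))%:E.
Proof. by move=> mA; rewrite fineK // fin_num_measure. Qed.

Lemma pdfE (t : R) : normal_pdf 0 1 t = normal_peak 1 * expR (- t ^+ 2 / 2).
Proof.
rewrite normal_pdfE ?oner_neq0 //= /normal_fun subr0 expr1n.
done.
Qed.

Lemma Phi_split (x y : R) : x < y -> Phi y = Phi x + fine (P `]x, y]).
Proof.
move=> xy; rewrite /Phi.
rewrite (@itv_bndbnd_setU _ _ _ (BRight x)) //; last first.
  by rewrite bnd_simp ltW.
rewrite measureU //; last first.
  apply/seteqP; split => t //= []; rewrite /= !in_itv /=.
  by move=> tx /andP[xt _]; move: (lt_le_trans xt tx); rewrite ltxx.
rewrite fineD //; exact: fin_num_measure.
Qed.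


Lemma mpdf (D : set R) : measurable D ->
  measurable_fun D (fun t : R => (normal_pdf 0 1 t)%:E).
Proof.
move=> mD; apply/measurable_EFinP; apply: measurable_funTS.
exact: measurable_normal_pdf.
Qed.

Lemma mu_itv (x y : R) : x < y -> mu `]x, y] = (y - x)%:E.
Proof. by move=> xy; rewrite lebesgue_measure_itv /= lte_fin xy. Qed.

Lemma P_ub (x y : R) : x < y -> (P `]x, y] <= (normal_peak 1 * (y - x))%:E)%E.
Proof.
move=> xy; rewrite /normal_prob.
apply: (@le_trans _ _ (\int[mu]_(t in `]x, y]) (cst (normal_peak 1 : R)%:E) t)%E).
  apply: ge0_le_integral => //=.
  - by move=> t _; rewrite lee_fin normal_pdf_ge0.
  - exact: mpdf.
  - by move=> t _; rewrite lee_fin normal_pdf_ub ?oner_neq0.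
rewrite integral_cst //=; rewrite -[(_ `]x, y])%classic]/(mu `]x,y]) mu_itv // -EFinM.
Qed.

Lemma P_lb (x y : R) : x < y ->
  ((normal_peak 1 * expR (- (x ^+ 2 + y ^+ 2) / 2) * (y - x))%:E <= P `]x, y])%E.
Proof.
move=> xy; rewrite /normal_prob.
apply: (@le_trans _ _ (\int[mu]_(t in `]x, y])
   (cst (normal_peak 1 * expR (- (x ^+ 2 + y ^+ 2) / 2) : R)%:E) t)%E).
  by rewrite integral_cst //=; rewrite -[(_ `]x, y])%classic]/(mu `]x,y]) mu_itv // -EFinM.
apply: ge0_le_integral => //=.
- by move=> t _; rewrite lee_fin mulr_ge0 ?normal_peak_ge0 ?expR_ge0.
- exact: mpdf.
move=> t; rewrite /= in_itv /= => /andP[xt ty].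
rewrite lee_fin pdfE ler_wpM2l ?normal_peak_ge0 // ler_expR.
have h1 : 0 <= (t - x) * (y - t) by rewrite mulr_ge0 // subr_ge0 // ltW.
have : t ^+ 2 <= x ^+ 2 + y ^+ 2.
  have [s0|s0] := leP 0 (x + y).
    have h2 : 0 <= (y - t) * (x + y) by rewrite mulr_ge0 // subr_ge0.
    nra.
  have h2 : 0 <= (t - x) * (- (x + y)) by rewrite mulr_ge0 // ?subr_ge0 ?oppr_ge0 ?ltW.
  nra.
lra.
Qed.


Lemma Phi_incr_ub (x y : R) : x < y -> Phi y - Phi x <= normal_peak 1 * (y - x).
Proof.
move=> xy; rewrite (Phi_split xy) [Phi x + _]addrC addrK.
by have := P_ub xy; rewrite (P_fin (measurable_itv _)) lee_fin.
Qed.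

Lemma Phi_incr_lb (x y : R) : x < y ->
  normal_peak 1 * expR (- (x ^+ 2 + y ^+ 2) / 2) * (y - x) <= Phi y - Phi x.
Proof.
move=> xy; rewrite (Phi_split xy) [Phi x + _]addrC addrK.
by have := P_lb xy; rewrite (P_fin (measurable_itv _)) lee_fin.
Qed.

Lemma Phi_lt (x y : R) : x < y -> Phi x < Phi y.
Proof.
move=> xy; rewrite -subr_gt0; apply: lt_le_trans (Phi_incr_lb xy).
by rewrite mulr_gt0 ?subr_gt0 // mulr_gt0 ?expR_gt0 // normal_peak_gt0 ?oner_neq0.
Qed.

Lemma Phi_le (x y : R) : x <= y -> Phi x <= Phi y.
Proof. by rewrite le_eqVlt => /orP[/eqP->//|/Phi_lt/ltW]. Qed.

Lemma Phi_lip (x t : R) : `|Phi x - Phi t| <= normal_peak 1 * `|x - t|.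
Proof.
have [xt|tx|->] := ltgtP x t.
- rewrite distrC (distrC x) !gtr0_norm ?subr_gt0 ?Phi_lt //.
  exact: Phi_incr_ub.
- rewrite !gtr0_norm ?subr_gt0 ?Phi_lt //.
  exact: Phi_incr_ub.
- by rewrite !subrr normr0 mulr0.
Qed.

Lemma Phi_cont : continuous (@Phi R : R -> R).
Proof.
move=> x; apply/cvgrPdist_lt => e e0.
have L0 : 0 < normal_peak 1 + 1 :> R by rewrite ltr_wpDl ?normal_peak_ge0.
apply/nbhs_ballP; exists (e / (normal_peak 1 + 1)) => /=.
  by rewrite divr_gt0.
move=> t; rewrite /ball /= => hxt.
apply: le_lt_trans (Phi_lip x t) _.
have h : `|x - t| * (normal_peak 1 + 1) < e by rewrite -ltr_pdivlMr.
have := normal_peak_ge0 (1:R); have := normr_ge0 (x - t); nra.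
Qed.

Lemma Phi_ge0 (x : R) : 0 <= Phi x.
Proof. by rewrite /Phi fine_ge0 // measure_ge0. Qed.

Lemma Phi_le1 (x : R) : Phi x <= 1.
Proof.
rewrite /Phi -lee_fin -(P_fin (measurable_itv _)).
exact: probability_le1.
Qed.

Lemma Phi_gt0 (x : R) : 0 < Phi x.
Proof. by apply: le_lt_trans (Phi_ge0 (x - 1)) (Phi_lt _); rewrite gtrBl. Qed.

Lemma Phi_lt1 (x : R) : Phi x < 1.
Proof. by apply: lt_le_trans (Phi_lt _) (Phi_le1 (x + 1)); rewrite ltrDl. Qed.


Lemma nat_gt (t : R) : exists n : nat, `|t| < n%:R.
Proof.
exists (Num.trunc `|t|).+1; rewrite -truncn_lt_nat //.
Qed.

Lemma Phi_small (q : R) : 0 < q -> exists x, Phi x < q.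
Proof.
move=> q0.
pose F := fun n : nat => `]-oo, - (n%:R : R)]%classic.
have mF : forall i, measurable (F i) by move=> i; exact: measurable_itv.
have F0 : \bigcap_n F n = set0.
  apply/seteqP; split => t //= Ht.
  have [n hn] := nat_gt t.
  have := Ht n I; rewrite /F /= in_itv /= => tn.
  have := ler_norm (- t); rewrite normrN; move: hn tn; lra.
have niF : nonincreasing_seq F.
  move=> m n mn; apply/subsetPset; apply: subset_itvl.
  by rewrite bnd_simp lerN2 ler_nat.
have hF0 : (P (F 0%N) < +oo)%E by rewrite (P_fin (mF 0%N)) ltry.
have H := nonincreasing_cvg_mu (mu := P) (F := F) hF0 mF
  (bigcapT_measurable mF) niF.
rewrite F0 measure0 in H.
have := cvgr_lt 0 (fine_cvg H) q q0.
move=> [N _ HN]; exists (- N%:R); exact: HN N (leqnn N).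
Qed.

Lemma Phi_big (q : R) : q < 1 -> exists x, q < Phi x.
Proof.
move=> q1.
pose F := fun n : nat => `]-oo, (n%:R : R)]%classic.
have mF : forall i, measurable (F i) by move=> i; exact: measurable_itv.
have F0 : \bigcup_n F n = setT.
  apply/seteqP; split => t //= _.
  have [n hn] := nat_gt t.
  exists n => //; rewrite /F /= in_itv /=.
  have := ler_norm t; move: hn; lra.
have ndF : nondecreasing_seq F.
  move=> m n mn; apply/subsetPset; apply: subset_itvl.
  by rewrite bnd_simp ler_nat.
have H := nondecreasing_cvg_mu (mu := P) mF
  (bigcupT_measurable F mF) ndF.
have E1 : P [set: R] = 1%E by exact: probability_setT.
rewrite F0 in H.
have {}H : (P \o F) x @[x --> \oo] --> (1:R)%:E by rewrite -E1; exact: H.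
have := cvgr_gt 1 (fine_cvg H) q q1.
move=> [N _ HN]; exists N%:R; exact: HN N (leqnn N).
Qed.


Lemma Phi_surj (q : R) : 0 < q < 1 -> exists x, Phi x = q.
Proof.
move=> /andP[q0 q1].
have [x1 h1] := Phi_small q0.
have [x2 h2] := Phi_big q1.
have x12 : x1 <= x2.
  rewrite leNgt; apply/negP => /Phi_lt h; move: h1 h2 h; lra.
have cw : {within `[x1, x2], continuous (@Phi R : R -> R)}%classic.
  exact: continuous_subspaceT Phi_cont.
have := (@IVT R (@Phi R) x1 x2 q x12 cw).
rewrite ge_min le_max (ltW h1) (ltW h2) orbT => /(_ isT) [c _ hc].
by exists c.
Qed.

Lemma Phi_invK (q : R) : 0 < q < 1 -> Phi (Phi_inv q) = q.
Proof. by move=> hq; rewrite /Phi_inv; apply: (xgetPex 0 (Phi_surj hq)). Qed.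

Lemma Phi_inj (x y : R) : Phi x = Phi y -> x = y.
Proof.
move=> e; have [xy|yx|//] := ltgtP x y.
- by have := Phi_lt xy; rewrite e ltxx.
- by have := Phi_lt yx; rewrite e ltxx.
Qed.

Lemma Phi_inv_lt (q1 q2 : R) : 0 < q1 < 1 -> 0 < q2 < 1 -> q1 < q2 ->
  Phi_inv q1 < Phi_inv q2.
Proof.
move=> h1 h2 q12; rewrite ltNge; apply/negP => /Phi_le.
rewrite !Phi_invK //; move: q12; lra.
Qed.

End PhiSec.

Section Main.
Variables (R : realType) (N sigma b beta : R).
Hypotheses (hN : 0 < N) (hsigma : 0 < sigma) (hb : 0 < b) (hbeta : 0 < beta).

Local Notation E := (expR b - 1).
Lemma E0 : 0 < E. Proof. by rewrite subr_gt0 expR_gt1. Qed.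

Lemma q_in (d : R) : 0 < d < b -> 0 < qfun b d < 1.
Proof.
move=> /andP[d0 db]; rewrite /qfun.
apply/andP; split.
  by rewrite divr_gt0 ?E0 // subr_gt0 expR_gt1 subr_gt0.
rewrite ltr_pdivrMr ?E0 // mul1r ltrD2r ltr_expR; lra.
Qed.

Lemma q_lt (d1 d2 : R) : d1 < d2 -> qfun b d2 < qfun b d1.
Proof.
move=> d12; rewrite /qfun ltr_pM2r ?invr_gt0 ?E0 // ltrD2r ltr_expR; lra.
Qed.

Lemma varphi_lt (d1 d2 : R) : 0 < d1 -> d1 < d2 -> d2 < b ->
  varphi N sigma b d2 < varphi N sigma b d1.
Proof.
move=> d10 d12 d2b.
have h1 : 0 < d1 < b by apply/andP; split => //; lra.
have h2 : 0 < d2 < b by apply/andP; split => //; lra.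
have hp := Phi_inv_lt (q_in h2) (q_in h1) (q_lt d12).
rewrite /varphi ltr_pM2l // ltr_expR.
have : sigma * Phi_inv (qfun b d2) < sigma * Phi_inv (qfun b d1) by rewrite ltr_pM2l.
lra.
Qed.


Definition hh (x : R) := expR (sigma * x - sigma ^+ 2 / 2) * (1 + Phi x * E).

Lemma h_cont : continuous hh.
Proof.
move=> x; apply: cvgM.
  apply: (@continuous_comp _ _ _ (fun y : R => sigma * y - sigma ^+ 2 / 2) expR).
    apply: cvgB; last exact: cvg_cst.
    by apply: cvgM; [exact: cvg_cst | exact: cvg_id].
  exact: continuous_expR.
apply: cvgD; first exact: cvg_cst.
by apply: cvgM; [exact: Phi_cont | exact: cvg_cst].
Qed.

Lemma exists_db : exists db, 0 < db < b /\ varphi N sigma b db = beta * N.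
Proof.
have [x1 ex1] : exists x1 : R, x1 = (ln beta + sigma ^+ 2 / 2 - 1) / sigma by eexists.
have [x2 ex2] : exists x2 : R, x2 = (ln beta + b + sigma ^+ 2 / 2 + 1) / sigma by eexists.
have s0 : sigma != 0 by rewrite gt_eqF.
have e1 : sigma * x1 - sigma ^+ 2 / 2 = ln beta - 1 by rewrite ex1; field.
have e2 : sigma * x2 - sigma ^+ 2 / 2 = ln beta + b + 1 by rewrite ex2; field.
have lb : expR (ln beta) = beta by rewrite lnK // posrE.
have x12 : x1 <= x2.
  rewrite ex1 ex2; apply: ler_wpM2r; first by rewrite invr_ge0 ltW.
  move: (ln beta) (sigma ^+ 2 / 2) hb => u v hb0; lra.
have hx1 : hh x1 < beta * expR b.
  rewrite /hh e1 expRD lb.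
  have A : 1 + Phi x1 * E < expR b.
    have H1 : 0 < 1 - Phi x1 by rewrite subr_gt0 Phi_lt1.
    have := mulr_gt0 H1 E0; nra.
  have B : expR (-1) < 1 :> R by rewrite -expR0 ltr_expR.
  have C : 0 < 1 + Phi x1 * E by have := mulr_ge0 (Phi_ge0 x1) (ltW E0); nra.
  rewrite -mulrA ltr_pM2l //; apply: lt_trans A.
  by rewrite gtr_pMl.
have hx2 : beta * expR b < hh x2.
  rewrite /hh e2 !expRD lb.
  have A : 1 <= 1 + Phi x2 * E by have := mulr_ge0 (Phi_ge0 x2) (ltW E0); nra.
  have B : 1 < expR 1 :> R by rewrite expR_gt1.
  rewrite -!mulrA ltr_pM2l // ltr_pMr ?expR_gt0 //.
  apply: lt_le_trans B _; rewrite ler_peMr //; exact: ltW (expR_gt0 _).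
have cw : {within `[x1, x2], continuous hh}%classic.
  exact: continuous_subspaceT h_cont.
have := (@IVT R hh x1 x2 (beta * expR b) x12 cw).
rewrite ge_min le_max (ltW hx1) (ltW hx2) orbT => /(_ isT) [c _ hc].
have [L eLd] : exists L : R, L = ln (1 + Phi c * E) by eexists.
have C0 : 0 < 1 + Phi c * E by have := mulr_ge0 (Phi_ge0 c) (ltW E0); nra.
have eL : expR L = 1 + Phi c * E by rewrite eLd lnK // posrE.
have L0 : 0 < L.
  rewrite -expR_gt1 eL; have := mulr_gt0 (Phi_gt0 c) E0; nra.
have Lb : L < b.
  have H1 : 0 < 1 - Phi c by rewrite subr_gt0 Phi_lt1.
  rewrite -ltr_expR eL; have := mulr_gt0 H1 E0; nra.
exists (b - L); split.
  apply/andP; split; lra.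
have hq : qfun b (b - L) = Phi c.
  rewrite /qfun (_ : b - (b - L) = L) ?eL; last by ring.
  by field; rewrite gt_eqF ?E0.
have hpi : Phi_inv (qfun b (b - L)) = c.
  apply: Phi_inj; rewrite Phi_invK hq //.
  by rewrite Phi_gt0 Phi_lt1.
rewrite /varphi hpi.
have -> : sigma * c - (b - L) - sigma ^+ 2 / 2 =
  (sigma * c - sigma ^+ 2 / 2) + L + (- b) by ring.
rewrite expRD expRD expRN eL.
move: hc; rewrite /hh => ->.
have := expR_gt0 b => eb.
field; rewrite gt_eqF //.
Qed.

End Main.

Theorem proposition2 (R : realType) (N sigma b beta : R)
  (hN : 0 < N) (hsigma : 0 < sigma) (hb : 0 < b) (hbeta : 0 < beta) :
  exists db : R,
    [/\ 0 < db < b,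
        varphi N sigma b db = beta * N &
        (forall d : R, 0 < d < b -> varphi N sigma b d = beta * N -> d = db)] /\
    [/\
        (forall d : R, 0 < d < db -> varphi N sigma b d > beta * N),
        (forall d : R, db < d < b -> varphi N sigma b d < beta * N),
        (forall d1 d2 : R, 0 < d1 -> d1 < d2 -> d2 <= db ->
           Gobj N sigma b beta d1 < Gobj N sigma b beta d2) &
        (forall dstar : R, 0 < dstar < b ->
           (forall d : R, 0 < d < b ->
              Gobj N sigma b beta d <= Gobj N sigma b beta dstar) ->
           db <= dstar)].
Proof.
have [db [hd hv]] : exists db, 0 < db < b /\ varphi N sigma b db = beta * N.
  by apply: exists_db.
have vlt : forall d1 d2, 0 < d1 -> d1 < d2 -> d2 < b ->
    varphi N sigma b d2 < varphi N sigma b d1.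
  by move=> d1 d2 h1 h2 h3; apply: varphi_lt.
move/andP: hd => [d0 db_b].
have gt1 : forall d, 0 < d < db -> beta * N < varphi N sigma b d.
  move=> d /andP[h1 h2]; rewrite -hv; apply: vlt => //.
have lt1 : forall d, db < d < b -> varphi N sigma b d < beta * N.
  move=> d /andP[h1 h2]; rewrite -hv; apply: vlt => //.
have Gform : forall d, 0 < d -> d <= db ->
    Gobj N sigma b beta d = beta * N * (expR d - 1).
  move=> d h1 h2; rewrite /Gobj /Fstar min_r //.
  case: (eqVneq d db) => [->|ne]; first by rewrite hv.
  by apply/ltW/gt1; rewrite h1 /= lt_neqAle ne h2.
have Ginc : forall d1 d2, 0 < d1 -> d1 < d2 -> d2 <= db ->
    Gobj N sigma b beta d1 < Gobj N sigma b beta d2.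
  move=> d1 d2 h1 h2 h3.
  rewrite !Gform //; last by apply: ltW (lt_le_trans h2 h3).
  - by rewrite ltr_pM2l ?mulr_gt0 // ltrD2r ltr_expR.
  - exact: lt_trans h2.
exists db; split; split => //.
- by rewrite d0 db_b.
- move=> d /andP[h1 h2] hvd.
  have [dl|dg|//] := ltgtP d db.
  + by have := gt1 d; rewrite h1 dl hvd ltxx => /(_ isT).
  + by have := lt1 d; rewrite dg h2 hvd ltxx => /(_ isT).
- move=> ds /andP[h1 h2] hmax; rewrite leNgt; apply/negP => hlt.
  have := hmax db; rewrite d0 db_b => /(_ isT).
  by rewrite leNgt Ginc.
Qed.
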